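(* For every integer $m\ge 1$, $$\sum_{b=0}^{m}\sum_{d=0}^{b}\sum_{a=d}^{m-b}(-1)^{a-d}\binom{m-b}{a}\binom{a+b-d}{b}\binom{b}{d}=1.$$ *)

(* Defs.v *)
From mathcomp Require Import all_boot all_order all_algebra.

(* Main.v *)
Require Import Defs.
From mathcomp Require Import all_boot all_order all_algebra.
From mathcomp Require Import zify ring.
Import GRing.Theory.
Local Open Scope ring_scope.

Lemma keyU (a b : nat) :
  \sum_(0 <= d < b.+1) ((-1) ^+ d * ('C(b, d) * 'C(a + b - d, b))%:R : int) = 1.
Proof.
elim: b => [|b IH]; first by rewrite big_nat1 !bin0.
pose g d : int := (-1) ^+ d * ('C(b, d) * 'C(a + b.+1 - d, b.+1))%:R.
pose h d : int := (-1) ^+ d * ('C(b, d) * 'C(a + b - d, b.+1))%:R.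
have E1 : \sum_(0 <= d < b.+2) ((-1) ^+ d * ('C(b.+1, d) * 'C(a + b.+1 - d, b.+1))%:R : int)
   = \sum_(0 <= d < b.+2) g d - \sum_(0 <= d < b.+1) h d.
  rewrite big_nat_recl // [in RHS]big_nat_recl //.
  have -> : \sum_(0 <= i < b.+1) ((-1) ^+ i.+1 * ('C(b.+1, i.+1) * 'C(a + b.+1 - i.+1, b.+1))%:R : int)
     = \sum_(0 <= i < b.+1) g i.+1 - \sum_(0 <= i < b.+1) h i.
    rewrite -sumrB; apply: eq_big_nat => i _.
    rewrite /g /h binS addnS subSS natrM natrD exprS. ring.
  rewrite /g /h !bin0 !subn0 !mul1n expr0 !mul1r addnS.
  ring.
rewrite E1 big_nat_recr // /= {2}/g (bin_small (ltnSn b)) mul0n mulr0 addr0 -sumrB -[RHS]IH.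
apply: eq_big_nat => d /andP[_ hd].
rewrite /g /h addnS subSn; last by lia.
by rewrite binS !natrM natrD; ring.
Qed.

Lemma alt_binom (n : nat) :
  \sum_(0 <= a < n.+1) ((-1) ^+ a * 'C(n, a)%:R : int) = (n == 0%N)%:R.
Proof.
rewrite -expr0n -(subrr (1:int)) exprDn big_mkord.
by apply: eq_bigr => i _; rewrite expr1n mul1r mulr_natr.
Qed.

Theorem mainTheorem4 (m : nat) (hm : (1 <= m)%N) :
  \sum_(0 <= b < m.+1) \sum_(0 <= d < b.+1) \sum_(d <= a < (m - b).+1)
    ((-1) ^+ (a - d) * ('C(m - b, a) * 'C(a + b - d, b) * 'C(b, d))%:R : int)
  = 1.
Proof.
have HX : \sum_(0 <= b < m.+1) (((m - b)%N == 0%N)%:R : int) = 1.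
  rewrite big_nat_recr //= subnn /= big1_seq ?add0r // => b /andP[_].
  by rewrite mem_index_iota => /andP[_ hb]; have -> : ((m - b)%N == 0%N) = false by lia.
apply: (etrans _ HX).
apply: eq_big_nat => b /andP[_ hb].
rewrite -alt_binom.
transitivity (\sum_(0 <= d < b.+1) \sum_(0 <= a < (m - b).+1)
    ((-1) ^+ (a - d) * ('C(m - b, a) * 'C(a + b - d, b) * 'C(b, d))%:R : int)).
  apply: eq_big_nat => d /andP[_ hd].
  rewrite (big_nat_widenl _ _ _ _ _ (leq0n d)) big_mkcond /=.
  apply: eq_big_nat => a _; case: leqP => // had.
  by rewrite (bin_small (_ : a + b - d < b)%N) ?muln0 ?mul0n ?mulr0 //; lia.
rewrite exchange_big_nat; apply: eq_big_nat => a _.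
transitivity ((-1) ^+ a * 'C(m - b, a)%:R *
  \sum_(0 <= d < b.+1) ((-1) ^+ d * ('C(b, d) * 'C(a + b - d, b))%:R : int));
  last by rewrite keyU mulr1.
rewrite mulr_sumr; apply: eq_big_nat => d /andP[_ hd].
case: (leqP d a) => hda.
  Show.   have -> : ((-1) ^+ (a - d) : int) = (-1) ^+ a * (-1) ^+ d.
    have E : a = (a - d + d)%N by rewrite subnK.
    by rewrite {2}E exprD -mulrA -exprD addnn -mul2n exprM sqrrN expr1n ?expr1n mulr1.
  rewrite !natrM; ring.
by rewrite (bin_small (_ : a + b - d < b)%N) ?muln0 ?mul0n ?mulr0 ?mul0r //; lia.
Qed.
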